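(* Let $N\ge 2$ be an integer, $\lambda\in[0,\frac{\pi}{2})$, and let $\mathcal{M}=(M_1,M_2,M_3)$ be a measurement scenario with $M_3=\{C_0,C_1\}$, $C_0,C_1\in[0,\pi)$. Then the quantum scenario $(|B(\lambda)\rangle,\mathcal{M})$ is a paradox whenever $\lambda,C_0,C_1,M_1,M_2$ satisfy one of the following conditions: (a) $N=2$ and the parameters describe the standard GHZ paradox, namely $\lambda=0$ and $M_1=M_2=M_3=\{0,\frac{\pi}{2}\}$. (b) $N>2$, $N$ is even, and there exist integers $s,t$ with $s$ even, $t$ odd, $1\le s<N$ and $1\le t\le s-1$, such that $C_0=0$, $\delta(\lambda,C_1)\equiv \frac{\pi}{N}s$, $\beta(\lambda,C_1)\equiv-\frac{\pi}{N}t$; and $M_1=M_2=\{\frac{k\pi}{N}:k=0,\dots,N-1\}$. In particular, if moreover $t=s/2$, then $\lambda=\frac{\pi}{2}-\frac{\pi}{N}t$ and $C_1=\frac{\pi}{2}$. (c) There exist integers $s,t'$ with $s$ even, $1\le s<N$ and $0\le t'\le s/2-1$, such that $C_1=\pi-C_0$, $\delta(\lambda,C_0)\equiv\delta(\lambda,C_1)\equiv\frac{\pi}{N}s$, $\beta(\lambda,C_0)\equiv-\frac{\pi}{N}(t'+\frac12)$, $\beta(\lambda,C_1)\equiv-\frac{\pi}{N}(s-t'-\frac12)$; and $M_1=\{\frac{k\pi}{N}:k=0,\dots,N-1\}$, $M_2=\{\frac{(k+\frac12)\pi}{N}:k=0,\dots,N-1\}$. (d) There exist integers $s,s',t'$ with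 $s,s'$ even, $t'$ odd, $1\le s<s'<N$ and $1\le|t'|\le N-1$, such that $\delta(\lambda,C_0)\equiv\frac{\pi}{N}s$, $\delta(\lambda,C_1)\equiv\frac{\pi}{N}s'$, $\beta(\lambda,C_1)-\beta(\lambda,C_0)\equiv\frac{\pi}{N}t'$; and, letting $t$ be the real number with $0<t<s$ and $\beta(\lambda,C_0)\equiv-\frac{\pi}{N}t$ and setting $\nu:=\lceil t\rceil-t$, we have $M_1=\{\frac{k\pi}{N}:k=0,\dots,N-1\}$ and $M_2=\{\frac{(k+\nu)\pi}{N}:k=0,\dots,N-1\}$.
   Context: Throughout, $\equiv$ denotes equality modulo $2\pi$. For $\varphi\in\mathbb{R}$, the equatorial measurement on a qubit is $E_\varphi=\cos\varphi\, X+\sin\varphi\, Y$, with $+1$ eigenvector $|\varphi\rangle=\frac{1}{\sqrt2}(|0\rangle+e^{i\varphi}|1\rangle)$ and $-1$ eigenvector $|\varphi+\pi\rangle$; outcomes $+1,-1$ are relabelled $0,1$. Measurements are identified with their angles. A measurement scenario $\mathcal{M}=(M_1,M_2,M_3)$ consists of finite sets $M_i\subseteq[0,\pi)$ of measurement angles for qubit $i$; its contexts are the triples $(A,B,C)\in M_1\times M_2\times M_3$. For a three-qubit state $|\psi\rangle$, the event $(A,B,C)\to(a,b,c)$ ($a,b,c\in\{0,1\}$) is impossible if $(\langle A+a\pi|\otimes\langle B+b\pi|\otimes\langle C+c\pi|)|\psi\rangle=0$. The quantum scenario $(|\psi\rangle,\mathcal{M})$ is a paradox if for every assignment $g$ of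 an outcome in $\{0,1\}$ to each measurement of $M_1$, $M_2$, $M_3$ (treated as disjoint sets) there is a context $(A,B,C)$ such that the event $(A,B,C)\to(g(A),g(B),g(C))$ is impossible. For $\lambda\in[0,\frac{\pi}{2})$ let $|v_\lambda\rangle=\cos\frac{\lambda}{2}|0\rangle+\sin\frac{\lambda}{2}|1\rangle$, $|w_\lambda\rangle=\sin\frac{\lambda}{2}|0\rangle+\cos\frac{\lambda}{2}|1\rangle$, and define the interpolant state $|B(\lambda)\rangle=\frac{1}{\sqrt2}(|0\rangle|0\rangle|v_\lambda\rangle+|1\rangle|1\rangle|w_\lambda\rangle)$. Define (modulo $2\pi$) $\beta(\lambda,\varphi)=\varphi-2\arctan\left(\frac{\cos\frac{\lambda}{2}\sin\varphi}{\sin\frac{\lambda}{2}+\cos\frac{\lambda}{2}\cos\varphi}\right)$ and $\delta(\lambda,\varphi)=\beta(\lambda,\varphi+\pi)-\beta(\lambda,\varphi)\equiv\pi-2\arctan(\sin\varphi\tan\lambda)$. *)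

(* Defs.v *)
From Stdlib Require Import Reals ZArith List.
From Coquelicot Require Import Coquelicot.
Open Scope R_scope.

Definition eqm2pi (x y : R) : Prop := exists k : Z, x - y = IZR k * (2 * PI).

(* |phi> = (|0> + e^{i phi}|1>)/sqrt 2, as a function of the basis bit *)
Definition ket (phi : R) (b : bool) : C :=
  if b then (cos phi / sqrt 2, sin phi / sqrt 2) else (1 / sqrt 2, 0).

(* eigenvector for outcome a of E_phi : |phi + a pi> *)
Definition outcome_ket (phi : R) (a : bool) : bool -> C :=
  ket (if a then phi + PI else phi).

Definition state3 := bool -> bool -> bool -> C.

Definition bools : list bool := false :: true :: nil.

(* (<A+a pi| (x) <B+b pi| (x) <C+c pi|) |psi> *)
Definition amplitude (psi : state3) (A B Cc : R) (a b c : bool) : C :=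
  fold_right Cplus 0%C (map (fun x =>
  fold_right Cplus 0%C (map (fun y =>
  fold_right Cplus 0%C (map (fun z =>
    Cmult (Cmult (Cmult (Cconj (outcome_ket A a x)) (Cconj (outcome_ket B b y)))
                 (Cconj (outcome_ket Cc c z))) (psi x y z)) bools)) bools)) bools).

Definition impossible (psi : state3) (A B Cc : R) (a b c : bool) : Prop :=
  amplitude psi A B Cc a b c = 0%C.

Definition meas_set (M : R -> Prop) : Prop :=
  (exists l : list R, forall x, M x <-> In x l) /\ (forall x, M x -> 0 <= x < PI).

Definition is_scenario (M1 M2 M3 : R -> Prop) : Prop :=
  meas_set M1 /\ meas_set M2 /\ meas_set M3.

(* outcome assignments: one function per party (the M_i treated as disjoint) *)
Definition paradox (psi : state3) (M1 M2 M3 : R -> Prop) : Prop :=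
  forall g1 g2 g3 : R -> bool,
    exists A B Cc, M1 A /\ M2 B /\ M3 Cc /\ impossible psi A B Cc (g1 A) (g2 B) (g3 Cc).

(* |B(lambda)> = (|0>|0>|v> + |1>|1>|w>)/sqrt 2 *)
Definition vlam (lam : R) (z : bool) : R := if z then sin (lam/2) else cos (lam/2).
Definition wlam (lam : R) (z : bool) : R := if z then cos (lam/2) else sin (lam/2).
Definition Bstate (lam : R) : state3 := fun x y z =>
  RtoC (match x, y with
        | false, false => vlam lam z / sqrt 2
        | true, true => wlam lam z / sqrt 2
        | _, _ => 0
        end).

(* beta(lam,phi) = phi - 2 arctan(cos(lam/2) sin phi / (sin(lam/2)+cos(lam/2) cos phi)),
   taken modulo 2 pi; when the denominator vanishes, 2 arctan(+-oo) = +-pi = pi (mod 2 pi). *)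
Definition beta (lam phi : R) : R :=
  let d := sin (lam/2) + cos (lam/2) * cos phi in
  if Req_EM_T d 0 then phi - PI
  else phi - 2 * atan (cos (lam/2) * sin phi / d).

Definition delta (lam phi : R) : R := beta lam (phi + PI) - beta lam phi.

Definition Rceil (x : R) : Z := (1 - up (- x))%Z.

Definition grid (N : nat) (off : R) (x : R) : Prop :=
  exists k : nat, (k < N)%nat /\ x = (INR k + off) * PI / INR N.

(* Main.v *)
Require Import Defs.
From Stdlib Require Import Reals ZArith List Lra Lia Nsatz Classical Bool.
From Coquelicot Require Import Coquelicot.
Open Scope R_scope.

Lemma amp_expand lam Ap Bp Cp :
  fold_right Cplus 0%C (map (fun x =>
  fold_right Cplus 0%C (map (fun y =>
  fold_right Cplus 0%C (map (fun z =>
    Cmult (Cmult (Cmult (Cconj (ket Ap x)) (Cconj (ket Bp y)))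
                 (Cconj (ket Cp z))) (Bstate lam x y z)) bools)) bools)) bools)
  = let r := / sqrt 2 in let c := cos (lam/2) in let s := sin (lam/2) in
    let X := cos Ap * cos Bp - sin Ap * sin Bp in
    let Y := sin Ap * cos Bp + cos Ap * sin Bp in
    let D := s + c * cos Cp in
    (r^4 * (c + s * cos Cp + X * D - Y * (c * sin Cp)),
     r^4 * (- s * sin Cp - X * (c * sin Cp) - Y * D)).
Proof.
  unfold bools, ket, Bstate, vlam, wlam; simpl.
  unfold Cplus, Cmult, Cconj, RtoC; simpl.
  unfold Rdiv.
  apply injective_projections; simpl; ring.
Qed.

Lemma core c s cC sC (Hc : c*c + s*s = 1) (HC : cC*cC + sC*sC = 1)
  (HD : s + c * cC <> 0) :
  let D := s + c * cC in
  let q := c * sC / D in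
  let co2 := (1 - q*q) / (1 + q*q) in
  let si2 := 2 * q / (1 + q*q) in
  let X := - (cC * co2 + sC * si2) in
  let Y := - (sC * co2 - cC * si2) in
  c + s * cC + X * D - Y * (c * sC) = 0 /\ - s * sC - X * (c * sC) - Y * D = 0.
Proof.
  intros D q co2 si2 X Y.
  assert (HK : D*D + (c*sC)*(c*sC) <> 0).
  { intro H. apply HD. fold D. nra. }
  assert (Eco : co2 = (D*D - (c*sC)*(c*sC)) / (D*D + (c*sC)*(c*sC))).
  { unfold co2, q. field. split; auto. }
  assert (Esi : si2 = 2 * (c*sC) * D / (D*D + (c*sC)*(c*sC))).
  { unfold si2, q. field. split; auto. }
  unfold X, Y; rewrite Eco, Esi. clear X Y co2 si2 q Eco Esi.
  assert (HA : c*c + s*s - 1 = 0) by lra.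
  assert (HB : cC*cC + sC*sC - 1 = 0) by lra.
  split; apply (Rmult_eq_reg_l (D*D + (c*sC)*(c*sC))); auto; rewrite Rmult_0_r.
  - match goal with |- ?L = 0 => replace L with
     ((c*c + s*s - 1) * (c - c*cC^2 - c*sC^2) + (cC*cC + sC*sC - 1) * (c^3 - 2*c^2*s*cC - c^3*cC^2 - c^3*sC^2 - c))
     by (unfold D; field; auto) end.
    rewrite HA, HB; ring.
  - unfold D; field; auto.
Qed.

Lemma Z_nat_cases (k : Z) : exists n : nat, k = Z.of_nat n \/ k = (- Z.of_nat n)%Z.
Proof. exists (Z.abs_nat k). lia. Qed.

Lemma eqm_cs x y : eqm2pi x y -> cos x = cos y /\ sin x = sin y.
Proof.
  intros [k Hk]. destruct (Z_nat_cases k) as [n [E|E]]; subst k.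
  - rewrite <- INR_IZR_INZ in Hk.
    replace x with (y + 2 * INR n * PI) by lra.
    split; [apply cos_period | apply sin_period].
  - rewrite opp_IZR, <- INR_IZR_INZ in Hk.
    replace y with (x + 2 * INR n * PI) by lra.
    split; symmetry; [apply cos_period | apply sin_period].
Qed.

Lemma cos_2atan q : cos (2 * atan q) = (1 - q*q) / (1 + q*q).
Proof.
  rewrite cos_2a_cos, cos_atan.
  assert (H1 : 0 < 1 + q²) by (unfold Rsqr; nra).
  assert (H2 : sqrt (1 + q²) * sqrt (1 + q²) = 1 + q²) by (apply sqrt_sqrt; lra).
  assert (H3 : sqrt (1 + q²) <> 0) by (intro H; rewrite H in H2; lra).
  unfold Rsqr in *. set (t := sqrt (1 + q*q)) in *.
  replace (2 * (1 / t) * (1 / t) - 1) with (2 / (t*t) - 1) by (field; auto).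
  rewrite H2. field. lra.
Qed.

Lemma sin_2atan q : sin (2 * atan q) = 2 * q / (1 + q*q).
Proof.
  rewrite sin_2a, cos_atan, sin_atan.
  assert (H1 : 0 < 1 + q²) by (unfold Rsqr; nra).
  assert (H2 : sqrt (1 + q²) * sqrt (1 + q²) = 1 + q²) by (apply sqrt_sqrt; lra).
  assert (H3 : sqrt (1 + q²) <> 0) by (intro H; rewrite H in H2; lra).
  unfold Rsqr in *. set (t := sqrt (1 + q*q)) in *.
  replace (2 * (q / t) * (1 / t)) with (2 * q / (t*t)) by (field; auto).
  rewrite H2. reflexivity.
Qed.

Lemma amp_zero lam Ap Bp Cp : eqm2pi (Ap + Bp) (beta lam Cp + PI) ->
  fold_right Cplus 0%C (map (fun x =>
  fold_right Cplus 0%C (map (fun y =>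
  fold_right Cplus 0%C (map (fun z =>
    Cmult (Cmult (Cmult (Cconj (ket Ap x)) (Cconj (ket Bp y)))
                 (Cconj (ket Cp z))) (Bstate lam x y z)) bools)) bools)) bools) = 0%C.
Proof.
  intro H. rewrite amp_expand. cbv zeta.
  destruct (eqm_cs _ _ H) as [Hc Hs].
  rewrite <- cos_plus, <- sin_plus, Hc, Hs, neg_cos, neg_sin.
  assert (Hcs : cos (lam/2) * cos (lam/2) + sin (lam/2) * sin (lam/2) = 1)
    by (pose proof (sin2_cos2 (lam/2)); unfold Rsqr in *; lra).
  assert (HCs : cos Cp * cos Cp + sin Cp * sin Cp = 1)
    by (pose proof (sin2_cos2 Cp); unfold Rsqr in *; lra).
  set (c := cos (lam/2)) in *. set (s := sin (lam/2)) in *.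
  set (r := / sqrt 2).
  unfold beta. fold c s. destruct (Req_EM_T (s + c * cos Cp) 0) as [E|E].
  - rewrite cos_minus, sin_minus, cos_PI, sin_PI.
    apply injective_projections; simpl; apply Rmult_eq_0_compat_l.
    + match goal with |- ?L = _ => replace L with
        (2 * cos Cp * (s + c * cos Cp) - c * (cos Cp * cos Cp + sin Cp * sin Cp - 1)) by ring end.
      rewrite E, HCs. ring.
    + match goal with |- ?L = _ => replace L with
        (- 2 * sin Cp * (s + c * cos Cp)) by ring end.
      rewrite E. ring.
  - rewrite cos_minus, sin_minus, cos_2atan, sin_2atan.
    destruct (core c s (cos Cp) (sin Cp) Hcs HCs E) as [H1 H2].
    cbv zeta in H1, H2.
    apply injective_projections; simpl.
    + apply Rmult_eq_0_compat_l. rewrite <- H1. ring.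
    + apply Rmult_eq_0_compat_l. rewrite <- H2. ring.
Qed.
Lemma comb (N : Z) (HN : (0 < N)%Z) (P Q : Z -> bool)
  (HP : forall i k, P (i + N*k)%Z = xorb (Z.odd k) (P i))
  (HQ : forall j k, Q (j + N*k)%Z = xorb (Z.odd k) (Q j))
  x y (Hd : Z.odd (y - x) = true) :
  exists i, P i = true /\ (Q (x - i)%Z = true \/ Q (y - i)%Z = true).
Proof.
  apply NNPP; intro Hn.
  assert (H1 : forall i, P i = true -> Q (x - i)%Z = false).
  { intros i Hi. destruct (Q (x - i)%Z) eqn:E; auto. exfalso; apply Hn; eauto. }
  assert (H2 : forall i, P i = true -> Q (y - i)%Z = false).
  { intros i Hi. destruct (Q (y - i)%Z) eqn:E; auto. exfalso; apply Hn; eauto. }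
  assert (Step : forall i, P i = true -> P (i + (y - x))%Z = true).
  { intros i Hi.
    assert (E1 : Q (x - i + N)%Z = true).
    { replace (x - i + N)%Z with (x - i + N * 1)%Z by ring. rewrite HQ, H1; auto. }
    set (z := (y - (x - i + N))%Z).
    assert (E2 : P z = false).
    { destruct (P z) eqn:E; auto. pose proof (H2 z E) as F. unfold z in F.
      replace (y - (y - (x - i + N)))%Z with (x - i + N)%Z in F by ring. congruence. }
    replace (i + (y - x))%Z with (z + N * 1)%Z by (unfold z; ring).
    rewrite HP, E2. reflexivity. }
  assert (Iter : forall n : nat, forall i, P i = true -> P (i + Z.of_nat n * (y - x))%Z = true).
  { induction n; intros i Hi.
    - replace (i + Z.of_nat 0 * (y - x))%Z with i by lia. auto.
    - replace (i + Z.of_nat (S n) * (y - x))%Z with ((i + Z.of_nat n * (y - x)) + (y - x))%Z by lia.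
      apply Step, IHn, Hi. }
  assert (Ex : exists i, P i = true).
  { destruct (P 0%Z) eqn:E; eauto. exists (0 + N * 1)%Z. rewrite HP, E. reflexivity. }
  destruct Ex as [i Hi].
  pose proof (Iter (Z.to_nat N) i Hi) as F.
  rewrite Z2Nat.id in F by lia.
  rewrite (Z.mul_comm N) in F. rewrite Z.mul_comm in F.
  replace (i + N * (y - x))%Z with (i + N * (y - x))%Z in F by ring.
  rewrite HP, Hd, Hi in F. discriminate.
Qed.

Lemma eqm_refl a b : a = b -> eqm2pi a b.
Proof. intros ->. exists 0%Z. simpl. ring. Qed.
Lemma eqm_sym a b : eqm2pi a b -> eqm2pi b a.
Proof. intros [k Hk]. exists (-k)%Z. rewrite opp_IZR. lra. Qed.
Lemma eqm_trans a b c : eqm2pi a b -> eqm2pi b c -> eqm2pi a c.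
Proof. intros [k Hk] [l Hl]. exists (k + l)%Z. rewrite plus_IZR. lra. Qed.
Lemma eqm_add a b c d : eqm2pi a b -> eqm2pi c d -> eqm2pi (a + c) (b + d).
Proof. intros [k Hk] [l Hl]. exists (k + l)%Z. rewrite plus_IZR. lra. Qed.
Lemma eqm_rw a b b' : eqm2pi a b -> b = b' -> eqm2pi a b'.
Proof. intros H ->. exact H. Qed.

Definition pt (N : nat) (nu : R) (i : Z) : R :=
  (INR (Z.to_nat (i mod Z.of_nat N)) + nu) * PI / INR N.
Definition Psel (N : nat) (nu : R) (g : R -> bool) (i : Z) : bool :=
  Bool.eqb (Z.odd (i / Z.of_nat N)) (g (pt N nu i)).

Lemma pt_grid N nu i : (1 <= N)%nat -> grid N nu (pt N nu i).
Proof.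
  intros HN. exists (Z.to_nat (i mod Z.of_nat N)). split; [|reflexivity].
  pose proof (Z.mod_pos_bound i (Z.of_nat N)) as B. lia.
Qed.

Lemma Psel_shift N nu g i k : (1 <= N)%nat ->
  Psel N nu g (i + Z.of_nat N * k)%Z = xorb (Z.odd k) (Psel N nu g i).
Proof.
  intros HN. unfold Psel, pt.
  rewrite (Z.mul_comm (Z.of_nat N) k).
  rewrite Z.div_add by lia. rewrite Z.mod_add by lia.
  rewrite Z.odd_add.
  destruct (Z.odd (i / Z.of_nat N)), (Z.odd k), (g _); reflexivity.
Qed.

Lemma Psel_val N nu g i : (1 <= N)%nat -> Psel N nu g i = true ->
  eqm2pi (if g (pt N nu i) then pt N nu i + PI else pt N nu i)
         ((IZR i + nu) * PI / INR N).
Proof.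
  intros HN H. unfold Psel in H. apply Bool.eqb_prop in H.
  set (p := pt N nu i) in *.
  assert (HNR : INR N <> 0) by (apply not_0_INR; lia).
  set (m := (i / Z.of_nat N)%Z) in *.
  set (rho := (i mod Z.of_nat N)%Z) in *.
  assert (Ei : i = (Z.of_nat N * m + rho)%Z) by (apply Z.div_mod; lia).
  assert (Hrho : (0 <= rho)%Z) by (apply Z.mod_pos_bound; lia).
  assert (Ep : p = (IZR rho + nu) * PI / INR N).
  { unfold p, pt. fold rho. rewrite INR_IZR_INZ, Z2Nat.id by lia. reflexivity. }
  assert (Em : m = (2 * Z.div2 m + Z.b2z (Z.odd m))%Z) by apply Z.div2_odd.
  rewrite <- H.
  exists (- Z.div2 m)%Z.
  rewrite Ei, plus_IZR, mult_IZR, <- INR_IZR_INZ, opp_IZR, Ep.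
  rewrite Em at 2. rewrite plus_IZR, mult_IZR.
  destruct (Z.odd m); simpl; field; auto.
Qed.

Lemma glue N lam nu (M1 M2 M3 : R -> Prop) Ca Cb a0 a1 b0 b1 :
  (1 <= N)%nat ->
  (forall x, M1 x <-> grid N 0 x) -> (forall x, M2 x <-> grid N nu x) ->
  M3 Ca -> M3 Cb ->
  eqm2pi (beta lam Ca + PI) ((IZR a0 + nu) * PI / INR N) ->
  eqm2pi (beta lam (Ca + PI) + PI) ((IZR a1 + nu) * PI / INR N) ->
  eqm2pi (beta lam Cb + PI) ((IZR b0 + nu) * PI / INR N) ->
  eqm2pi (beta lam (Cb + PI) + PI) ((IZR b1 + nu) * PI / INR N) ->
  Z.odd (b0 - a0) = true -> Z.odd (b1 - a0) = true ->
  Z.odd (b0 - a1) = true -> Z.odd (b1 - a1) = true ->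
  paradox (Bstate lam) M1 M2 M3.
Proof.
  intros HN HM1 HM2 H3a H3b Ha0 Ha1 Hb0 Hb1 P00 P10 P01 P11 g1 g2 g3.
  assert (HNR : INR N <> 0) by (apply not_0_INR; lia).
  assert (Key : forall C x, M3 C ->
     eqm2pi (beta lam (if g3 C then C + PI else C) + PI) ((IZR x + nu) * PI / INR N) ->
     forall i, Psel N 0 g1 i = true -> Psel N nu g2 (x - i)%Z = true ->
     exists A B Cc, M1 A /\ M2 B /\ M3 Cc /\ impossible (Bstate lam) A B Cc (g1 A) (g2 B) (g3 Cc)).
  { intros C x HC HT i Hi Hj.
    exists (pt N 0 i), (pt N nu (x - i)%Z), C.
    split; [apply HM1, pt_grid; auto|].
    split; [apply HM2, pt_grid; auto|].
    split; [auto|].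
    unfold impossible, amplitude, outcome_ket. apply amp_zero.
    eapply eqm_trans; [apply eqm_add; [apply Psel_val; eauto | apply Psel_val; eauto]|].
    apply eqm_sym. eapply eqm_trans; [exact HT|]. apply eqm_refl.
    rewrite minus_IZR. field. auto. }
  set (xa := if g3 Ca then a1 else a0).
  set (xb := if g3 Cb then b1 else b0).
  assert (HTa : eqm2pi (beta lam (if g3 Ca then Ca + PI else Ca) + PI) ((IZR xa + nu) * PI / INR N))
    by (unfold xa; destruct (g3 Ca); auto).
  assert (HTb : eqm2pi (beta lam (if g3 Cb then Cb + PI else Cb) + PI) ((IZR xb + nu) * PI / INR N))
    by (unfold xb; destruct (g3 Cb); auto).
  assert (Hodd : Z.odd (xb - xa) = true) by (unfold xa, xb; destruct (g3 Ca), (g3 Cb); auto).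
  destruct (comb (Z.of_nat N) ltac:(lia) (Psel N 0 g1) (Psel N nu g2)
              (fun i k => Psel_shift N 0 g1 i k HN) (fun i k => Psel_shift N nu g2 i k HN)
              xa xb Hodd) as [i [Hi [Hj|Hj]]].
  - eapply Key; [exact H3a | exact HTa | exact Hi | exact Hj].
  - eapply Key; [exact H3b | exact HTb | exact Hi | exact Hj].
Qed.

Lemma cos_beta lam phi : 1 + sin lam * cos phi <> 0 ->
  cos (beta lam phi) = (cos phi + sin lam) / (1 + sin lam * cos phi).
Proof.
  intro HK0.
  assert (Hsl : sin lam = 2 * sin (lam/2) * cos (lam/2)).
  { rewrite <- sin_2a. f_equal. field. }
  rewrite Hsl in *.
  assert (Hcs : cos (lam/2) * cos (lam/2) + sin (lam/2) * sin (lam/2) - 1 = 0)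
    by (pose proof (sin2_cos2 (lam/2)); unfold Rsqr in *; lra).
  assert (HCs : cos phi * cos phi + sin phi * sin phi - 1 = 0)
    by (pose proof (sin2_cos2 phi); unfold Rsqr in *; lra).
  unfold beta.
  set (c := cos (lam/2)) in *. set (s := sin (lam/2)) in *.
  set (cC := cos phi) in *. set (sC := sin phi) in *.
  destruct (Req_EM_T (s + c * cC) 0) as [E|E].
  - rewrite cos_minus, cos_PI, sin_PI. fold cC sC.
    assert (Id : cC + 2 * s * c = - cC * (1 + 2 * s * c * cC) + 2 * (s + c * cC) * (c + s * cC)
                 - 2 * cC * (c * c + s * s - 1)) by ring.
    replace (c * c + s * s - 1) with (c * c + s * s - 1 - 0) in Id by ring.
    rewrite Id, E. replace (c * c + s * s - 1) with (c*c+s*s-1) by ring.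
    assert (HA : c * c + s * s - 1 = 0) by lra. rewrite HA. field. auto.
  - rewrite cos_minus, cos_2atan, sin_2atan. fold cC sC.
    set (D := s + c * cC) in *. set (Ee := c * sC).
    assert (HK : D*D + Ee*Ee <> 0) by (intro H; apply E; unfold Ee in *; nra).
    assert (Num : cC * (D*D - Ee*Ee) + 2 * sC * Ee * D = cC + 2 * s * c
       + cC * (c*c + s*s - 1) + 2*s*c*(cC*cC + sC*sC - 1) + c*c*cC*(cC*cC+sC*sC-1))
      by (unfold D, Ee; ring).
    assert (Den : D*D + Ee*Ee = 1 + 2 * s * c * cC + (c*c + s*s - 1) + c*c*(cC*cC+sC*sC-1))
      by (unfold D, Ee; ring).
    assert (HA : c * c + s * s - 1 = 0) by lra.
    rewrite HA, HCs in Num, Den.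
    match goal with |- ?L = _ => replace L with ((cC * (D*D - Ee*Ee) + 2 * sC * Ee * D) / (D*D + Ee*Ee)) end.
    2: { unfold Ee in *. field. split; auto. }
    rewrite Num, Den. f_equal; ring.
Qed.

Lemma part2 N lam C1 s t : (2 < N)%nat -> 0 <= lam < PI/2 -> 0 <= C1 < PI ->
  (1 <= t)%Z -> (s < Z.of_nat N)%Z -> (2*t = s)%Z ->
  eqm2pi (delta lam C1) (PI / INR N * IZR s) ->
  eqm2pi (beta lam C1) (- (PI / INR N * IZR t)) ->
  lam = PI/2 - PI / INR N * IZR t /\ C1 = PI/2.
Proof.
  intros HN Hl HC Ht Hs Hst Hd Hb.
  assert (HNR : 0 < INR N) by (apply lt_0_INR; lia).
  assert (HtN : 2 * IZR t < INR N).
  { rewrite INR_IZR_INZ. replace 2 with (IZR 2) by reflexivity. rewrite <- mult_IZR. apply IZR_lt. lia. }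
  assert (Ht1 : 1 <= IZR t) by (apply IZR_le; lia).
  assert (PIpos := PI_RGT_0).
  set (th := PI / INR N * IZR t).
  assert (Hth : 0 < th < PI / 2).
  { unfold th. split.
    - apply Rmult_lt_0_compat; [apply Rdiv_lt_0_compat|]; lra.
    - replace (PI / INR N * IZR t) with (PI * (IZR t / INR N)) by (field; lra).
      assert (IZR t / INR N < 1/2).
      { apply (Rmult_lt_reg_r (INR N)); auto. field_simplify; lra. }
      assert (0 < IZR t / INR N) by (apply Rdiv_lt_0_compat; lra).
      nra. }
  assert (Hcl : 0 < cos lam) by (apply cos_gt_0; lra).
  assert (Hsl0 : 0 <= sin lam) by (apply sin_ge_0; lra).
  assert (Hsl1 : sin lam < 1).
  { pose proof (sin2_cos2 lam). unfold Rsqr in *. nra. }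
  set (p := sin lam) in *.
  assert (Hb1 : eqm2pi (beta lam (C1 + PI)) th).
  { replace (beta lam (C1 + PI)) with (beta lam C1 + delta lam C1) by (unfold delta; ring).
    eapply eqm_rw; [apply eqm_add; eauto|]. unfold th. rewrite <- Hst, mult_IZR. simpl. ring. }
  destruct (eqm_cs _ _ Hb) as [Ecb _]. destruct (eqm_cs _ _ Hb1) as [Ecb1 _].
  rewrite cos_neg in Ecb. fold th in Ecb.
  set (x := cos C1) in *.
  assert (Hx : -1 <= x <= 1) by apply COS_bound.
  assert (HK1 : 1 + p * x <> 0) by nra.
  assert (HK2 : 1 + p * cos (C1 + PI) <> 0) by (rewrite neg_cos; fold x; nra).
  rewrite cos_beta in Ecb, Ecb1 by auto. rewrite neg_cos in Ecb1. fold x p in Ecb1. fold p in Ecb.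
  fold x in Ecb.
  assert (Eq : (x + p) / (1 + p * x) = (- x + p) / (1 + p * - x)) by congruence.
  assert (HK3 : 1 + p * - x <> 0) by nra.
  assert (E2 : (x + p) * (1 + p * - x) = (- x + p) * (1 + p * x)).
  { apply (Rmult_eq_reg_r (/ (1 + p * x) * / (1 + p * - x))).
    - replace ((x + p) * (1 + p * - x) * (/ (1 + p * x) * / (1 + p * - x))) with ((x + p) / (1 + p * x)) by (field; auto).
      rewrite Eq. field. auto.
    - apply Rmult_integral_contrapositive; split; apply Rinv_neq_0_compat; auto. }
  assert (Ex : x * (1 - p * p) = 0) by nra.
  assert (Hx0 : x = 0).
  { apply Rmult_integral in Ex. destruct Ex as [E|E]; auto. nra. }
  assert (HC1 : C1 = PI / 2).
  { apply cos_inj; try lra. fold x. rewrite Hx0, cos_PI2. reflexivity. }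
  split; auto.
  rewrite Hx0 in Ecb. replace ((0 + p) / (1 + p * 0)) with p in Ecb by (field).
  unfold p in Ecb. rewrite <- cos_shift in Ecb.
  assert (th = PI / 2 - lam) by (apply cos_inj; lra).
  fold th. lra.
Qed.

Lemma beta_pi lam C : beta lam (C + PI) = beta lam C + delta lam C.
Proof. unfold delta. ring. Qed.

Lemma beta_sin0 lam C : sin C = 0 -> beta lam C = C - PI \/ beta lam C = C.
Proof.
  intro H. unfold beta. destruct (Req_EM_T _ 0); [left; reflexivity|right].
  rewrite H. unfold Rdiv. rewrite Rmult_0_r, Rmult_0_l, atan_0. ring.
Qed.

Lemma tgt lam C u T : eqm2pi (beta lam C) u -> u + PI = T -> eqm2pi (beta lam C + PI) T.
Proof. intros H E. eapply eqm_rw; [apply eqm_add; [exact H | apply (eqm_refl PI PI eq_refl)] | exact E]. Qed.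

Lemma tgt_pi lam C u w T : eqm2pi (beta lam C) u -> eqm2pi (delta lam C) w -> u + w + PI = T ->
  eqm2pi (beta lam (C + PI) + PI) T.
Proof.
  intros H1 H2 E. rewrite beta_pi. eapply eqm_rw.
  - apply eqm_add; [apply eqm_add; [exact H1 | exact H2] | apply (eqm_refl PI PI eq_refl)].
  - exact E.
Qed.

Lemma even_odd_false s : Z.Even s -> Z.odd s = false.
Proof. intro H. rewrite <- Z.negb_even, (proj2 (Z.even_spec s) H). reflexivity. Qed.

Lemma grid2 x : grid 2 0 x <-> x = 0 \/ x = PI / 2.
Proof.
  split.
  - intros [k [Hk E]]. destruct k as [|[|k]]; [left|right|lia]; rewrite E; simpl; field.
  - intros [E|E]; [exists 0%nat | exists 1%nat]; split; try lia; rewrite E; simpl; field.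
Qed.

Ltac oddsimp := repeat rewrite ?Z.odd_sub, ?Z.odd_add, ?Z.odd_mul, ?Z.odd_opp.

Theorem theorem20 (N : nat) (lam C0 C1 : R) (M1 M2 : R -> Prop) :
  (2 <= N)%nat ->
  0 <= lam < PI / 2 ->
  0 <= C0 < PI -> 0 <= C1 < PI ->
  is_scenario M1 M2 (fun x => x = C0 \/ x = C1) ->
  let M3 := fun x => x = C0 \/ x = C1 in
  (* condition (a): standard GHZ *)
  ((N = 2%nat /\ lam = 0 /\
      (forall x, M1 x <-> x = 0 \/ x = PI / 2) /\
      (forall x, M2 x <-> x = 0 \/ x = PI / 2) /\
      (forall x, M3 x <-> x = 0 \/ x = PI / 2))
   (* condition (b) *)
   \/ ((2 < N)%nat /\ Nat.Even N /\
       exists s t : Z, Z.Even s /\ Z.Odd t /\ (1 <= s < Z.of_nat N)%Z /\ (1 <= t <= s - 1)%Z /\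
         C0 = 0 /\
         eqm2pi (delta lam C1) (PI / INR N * IZR s) /\
         eqm2pi (beta lam C1) (- (PI / INR N * IZR t)) /\
         (forall x, M1 x <-> grid N 0 x) /\ (forall x, M2 x <-> grid N 0 x))
   (* condition (c) *)
   \/ (exists s t' : Z, Z.Even s /\ (1 <= s < Z.of_nat N)%Z /\ (0 <= t' <= s / 2 - 1)%Z /\
         C1 = PI - C0 /\
         eqm2pi (delta lam C0) (PI / INR N * IZR s) /\
         eqm2pi (delta lam C1) (PI / INR N * IZR s) /\
         eqm2pi (beta lam C0) (- (PI / INR N * (IZR t' + 1/2))) /\
         eqm2pi (beta lam C1) (- (PI / INR N * (IZR s - IZR t' - 1/2))) /\
         (forall x, M1 x <-> grid N 0 x) /\ (forall x, M2 x <-> grid N (1/2) x))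
   (* condition (d) *)
   \/ (exists s s' t' : Z, Z.Even s /\ Z.Even s' /\ Z.Odd t' /\
         (1 <= s < s')%Z /\ (s' < Z.of_nat N)%Z /\ (1 <= Z.abs t' <= Z.of_nat N - 1)%Z /\
         eqm2pi (delta lam C0) (PI / INR N * IZR s) /\
         eqm2pi (delta lam C1) (PI / INR N * IZR s') /\
         eqm2pi (beta lam C1 - beta lam C0) (PI / INR N * IZR t') /\
         exists t : R, 0 < t < IZR s /\ eqm2pi (beta lam C0) (- (PI / INR N * t)) /\
           (forall x, M1 x <-> grid N 0 x) /\
           (forall x, M2 x <-> grid N (IZR (Rceil t) - t) x))
   -> paradox (Bstate lam) M1 M2 M3)
  /\
  (* "in particular" part of (b) *)
  (forall s t : Z, (2 < N)%nat -> Nat.Even N ->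
     Z.Even s -> Z.Odd t -> (1 <= s < Z.of_nat N)%Z -> (1 <= t <= s - 1)%Z ->
     C0 = 0 ->
     eqm2pi (delta lam C1) (PI / INR N * IZR s) ->
     eqm2pi (beta lam C1) (- (PI / INR N * IZR t)) ->
     (forall x, M1 x <-> grid N 0 x) -> (forall x, M2 x <-> grid N 0 x) ->
     (2 * t = s)%Z ->
     lam = PI / 2 - PI / INR N * IZR t /\ C1 = PI / 2).
Proof.
  intros HN Hlam HC0 HC1 Hsc M3.
  assert (HNR : INR N <> 0) by (apply not_0_INR; lia).
  assert (HNZ : IZR (Z.of_nat N) = INR N) by (symmetry; apply INR_IZR_INZ).
  split.
  - intros [Ha | [Hb | [Hc | Hd]]].
    +
      destruct Ha as [EN [El [HM1 [HM2 HM3]]]]. subst N lam.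
      assert (Hs0 : sin (0/2) = 0) by (replace (0/2) with 0 by field; apply sin_0).
      assert (Hc0 : cos (0/2) = 1) by (replace (0/2) with 0 by field; apply cos_0).
      assert (Bb0 : beta 0 (PI/2) = PI/2 - PI).
      { unfold beta. rewrite Hs0, Hc0, cos_PI2. destruct (Req_EM_T _ 0) as [_|E]; [reflexivity|].
        exfalso; apply E; ring. }
      assert (Bb1 : beta 0 (PI/2 + PI) = PI/2).
      { unfold beta. rewrite Hs0, Hc0, neg_cos, cos_PI2. destruct (Req_EM_T _ 0) as [_|E]; [ring|].
        exfalso; apply E; ring. }
      assert (HM1' : forall x, M1 x <-> grid 2 0 x) by (intro x; rewrite grid2; apply HM1).
      assert (HM2' : forall x, M2 x <-> grid 2 0 x) by (intro x; rewrite grid2; apply HM2).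
      assert (H30 : M3 0) by (apply HM3; auto).
      assert (H31 : M3 (PI/2)) by (apply HM3; auto).
      destruct (beta_sin0 0 0 sin_0) as [B0|B0];
      (destruct (beta_sin0 0 (0 + PI) ltac:(rewrite Rplus_0_l; apply sin_PI)) as [B1|B1]).
      * apply (glue 2 0 0 M1 M2 M3 0 (PI/2) 0 2 1 3); auto;
          try (apply eqm_refl; rewrite ?B0, ?B1, ?Bb0, ?Bb1; simpl; field); reflexivity.
      * apply (glue 2 0 0 M1 M2 M3 0 (PI/2) 0 4 1 3); auto;
          try (apply eqm_refl; rewrite ?B0, ?B1, ?Bb0, ?Bb1; simpl; field); reflexivity.
      * apply (glue 2 0 0 M1 M2 M3 0 (PI/2) 2 2 1 3); auto;
          try (apply eqm_refl; rewrite ?B0, ?B1, ?Bb0, ?Bb1; simpl; field); reflexivity.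
      * apply (glue 2 0 0 M1 M2 M3 0 (PI/2) 2 4 1 3); auto;
          try (apply eqm_refl; rewrite ?B0, ?B1, ?Bb0, ?Bb1; simpl; field); reflexivity.
    +
      destruct Hb as [HN2 [HE [s [t [Hs [Ht [Hs1 [Ht1 [EC0 [Hd [Hbt [HM1 HM2]]]]]]]]]]]].
      subst C0.
      set (n := Z.of_nat N) in *.
      assert (Hn : Z.odd n = false).
      { destruct HE as [m Hm]. unfold n. rewrite Hm, Nat2Z.inj_mul, Z.odd_mul. reflexivity. }
      apply even_odd_false in Hs. apply Z.odd_spec in Ht.
      assert (H30 : M3 0) by (left; reflexivity).
      assert (H31 : M3 C1) by (right; reflexivity).
      assert (Tb0 : eqm2pi (beta lam C1 + PI) ((IZR (n - t) + 0) * PI / INR N))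
        by (apply (tgt _ _ _ _ Hbt); rewrite minus_IZR, HNZ; field; auto).
      assert (Tb1 : eqm2pi (beta lam (C1 + PI) + PI) ((IZR (n - t + s) + 0) * PI / INR N))
        by (apply (tgt_pi _ _ _ _ _ Hbt Hd); rewrite plus_IZR, minus_IZR, HNZ; field; auto).
      destruct (beta_sin0 lam 0 sin_0) as [B0|B0];
      (destruct (beta_sin0 lam (0 + PI) ltac:(rewrite Rplus_0_l; apply sin_PI)) as [B1|B1]).
      * apply (glue N lam 0 M1 M2 M3 0 C1 0 n (n - t) (n - t + s)); auto; try lia;
          try (apply eqm_refl; rewrite ?B0, ?B1; rewrite ?HNZ; field; auto);
          oddsimp; rewrite ?Hn, ?Hs, ?Ht; reflexivity.
      * apply (glue N lam 0 M1 M2 M3 0 C1 0 (2 * n) (n - t) (n - t + s)); auto; try lia;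
          try (apply eqm_refl; rewrite ?B0, ?B1; rewrite ?mult_IZR, ?HNZ; simpl; field; auto);
          oddsimp; rewrite ?Hn, ?Hs, ?Ht; reflexivity.
      * apply (glue N lam 0 M1 M2 M3 0 C1 n n (n - t) (n - t + s)); auto; try lia;
          try (apply eqm_refl; rewrite ?B0, ?B1; rewrite ?HNZ; field; auto);
          oddsimp; rewrite ?Hn, ?Hs, ?Ht; reflexivity.
      * apply (glue N lam 0 M1 M2 M3 0 C1 n (2 * n) (n - t) (n - t + s)); auto; try lia;
          try (apply eqm_refl; rewrite ?B0, ?B1; rewrite ?mult_IZR, ?HNZ; simpl; field; auto);
          oddsimp; rewrite ?Hn, ?Hs, ?Ht; reflexivity.
    +
      destruct Hc as [s [tp [Hs [Hs1 [Htp [EC1 [Hd0 [Hd1 [Hb0 [Hb1 [HM1 HM2]]]]]]]]]]].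
      set (n := Z.of_nat N) in *.
      apply even_odd_false in Hs.
      apply (glue N lam (1/2) M1 M2 M3 C0 C1 (n - tp - 1) (n - tp - 1 + s) (n - s + tp) (n + tp));
        auto; try lia; try (left; reflexivity); try (right; reflexivity).
      * apply (tgt _ _ _ _ Hb0). rewrite !minus_IZR, HNZ. field. auto.
      * apply (tgt_pi _ _ _ _ _ Hb0 Hd0). rewrite plus_IZR, !minus_IZR, HNZ. field. auto.
      * apply (tgt _ _ _ _ Hb1). rewrite plus_IZR, !minus_IZR, HNZ. field. auto.
      * apply (tgt_pi _ _ _ _ _ Hb1 Hd1). rewrite !plus_IZR, HNZ. field. auto.
      * replace (n - s + tp - (n - tp - 1))%Z with (2 * tp + 1 - s)%Z by ring.
        oddsimp. rewrite Hs. reflexivity.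
      * replace (n + tp - (n - tp - 1))%Z with (2 * tp + 1)%Z by ring.
        oddsimp. reflexivity.
      * replace (n - s + tp - (n - tp - 1 + s))%Z with (2 * tp + 1 - 2 * s)%Z by ring.
        oddsimp. reflexivity.
      * replace (n + tp - (n - tp - 1 + s))%Z with (2 * tp + 1 - s)%Z by ring.
        oddsimp. rewrite Hs. reflexivity.
    +
      destruct Hd as [s [s' [tp [Hs [Hs' [Htp [Hss [Hs'N [Htp1 [Hd0 [Hd1 [Hdb [t [Ht [Hbt [HM1 HM2]]]]]]]]]]]]]]]].
      set (n := Z.of_nat N) in *.
      set (m := Rceil t) in *.
      apply even_odd_false in Hs. apply even_odd_false in Hs'. apply Z.odd_spec in Htp.
      assert (Hb1 : eqm2pi (beta lam C1) (PI / INR N * IZR tp + - (PI / INR N * t))).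
      { eapply eqm_trans; [|apply eqm_add; [exact Hdb | exact Hbt]]. apply eqm_refl. ring. }
      apply (glue N lam (IZR m - t) M1 M2 M3 C0 C1 (n - m) (n - m + s) (n - m + tp) (n - m + tp + s'));
        auto; try lia; try (left; reflexivity); try (right; reflexivity).
      * apply (tgt _ _ _ _ Hbt). rewrite !minus_IZR, HNZ. field. auto.
      * apply (tgt_pi _ _ _ _ _ Hbt Hd0). rewrite plus_IZR, !minus_IZR, HNZ. field. auto.
      * apply (tgt _ _ _ _ Hb1). rewrite plus_IZR, !minus_IZR, HNZ. field. auto.
      * apply (tgt_pi _ _ _ _ _ Hb1 Hd1). rewrite !plus_IZR, !minus_IZR, HNZ. field. auto.
      * replace (n - m + tp - (n - m))%Z with tp by ring. exact Htp.
      * replace (n - m + tp + s' - (n - m))%Z with (tp + s')%Z by ring.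
        oddsimp. rewrite Htp, Hs'. reflexivity.
      * replace (n - m + tp - (n - m + s))%Z with (tp - s)%Z by ring.
        oddsimp. rewrite Htp, Hs. reflexivity.
      * replace (n - m + tp + s' - (n - m + s))%Z with (tp + s' - s)%Z by ring.
        oddsimp. rewrite Htp, Hs, Hs'. reflexivity.
  - intros s t HN2 HE Hs Ht Hs1 Ht1 EC0 Hd Hbt HM1 HM2 Hst.
    eapply part2; eauto; try lia.
Qed.
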